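(* Let $\theta\in[0,1]^V$ be a feasible solution on a unit-weight graph with $n=|V|$ vertices. Then $\|W\theta\|_1\ge n+\|\theta\|_1-\mathsf{OPT}$.
   Context: For a unit-weight graph, $W$ is a symmetric $\{0,1\}$ matrix with $W_{v,v}=1$ (adjacency matrix plus identity). A vector $\theta\in\mathbb{R}_{\ge0}^V$ is feasible if $W\theta\ge\mathbf 1$ coordinatewise. $\mathsf{OPT}=\min\{\|\theta\|_1:\theta\ge0,\ W\theta\ge\mathbf 1\}$. *)

(* Defs.v *)
From HB Require Import structures.
From mathcomp Require Import all_boot all_order all_algebra.
From mathcomp Require Import classical_sets reals.
Set Implicit Arguments. Unset Strict Implicit. Unset Printing Implicit Defensive.
Import Order.TTheory GRing.Theory Num.Theory.
Local Open Scope ring_scope.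
Local Open Scope classical_set_scope.

Definition simple_graph (V : finType) (e : rel V) : Prop :=
  symmetric e /\ irreflexive e.

Definition Wmx (R : pzRingType) (V : finType) (e : rel V) (u v : V) : R :=
  if (u == v) || e u v then 1 else 0.

Definition Wapply (R : pzRingType) (V : finType) (e : rel V) (theta : V -> R) (v : V) : R :=
  \sum_(u : V) Wmx R e v u * theta u.

Definition l1norm (R : numDomainType) (V : finType) (x : V -> R) : R :=
  \sum_(v : V) `|x v|.

Definition feasible (R : numDomainType) (V : finType) (e : rel V) (theta : V -> R) : Prop :=
  (forall v, 0 <= theta v) /\ (forall v, 1 <= Wapply e theta v).

(* OPT = min { ||theta||_1 : theta feasible } (taken as the infimum; the
   minimum is attained for this LP). *)
Definition OPT (R : realType) (V : finType) (e : rel V) : R :=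
  inf [set x : R | exists theta : V -> R, feasible e theta /\ x = l1norm theta].

(* Main.v *)
Require Import Defs.
From HB Require Import structures.
From mathcomp Require Import all_boot all_order all_algebra.
From mathcomp Require Import classical_sets reals.
From mathcomp Require Import ring lra.
Import Order.TTheory GRing.Theory Num.Theory.
Local Open Scope ring_scope.

Section Aux.
Variables (R : realType) (V : finType) (e : rel V).
Hypothesis He : simple_graph e.

Lemma Wsym (u v : V) : Wmx R e u v = Wmx R e v u.
Proof. by rewrite /Wmx eq_sym (proj1 He u v). Qed.

Lemma W01 (u v : V) : 0 <= Wmx R e u v <= 1.
Proof. by rewrite /Wmx; case: ifP => _; rewrite ?lexx ?ler01. Qed.

Lemma Wswap (phi th : V -> R) :
  \sum_v phi v * Wapply e th v = \sum_u th u * Wapply e phi u.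
Proof.
rewrite /Wapply.
under eq_bigr do rewrite big_distrr.
rewrite exchange_big; apply: eq_bigr => u _; rewrite big_distrr.
apply: eq_bigr => v _; rewrite (Wsym v u) /=; ring.
Qed.

Lemma clip_feas (phi : V -> R) : feasible e phi ->
  feasible e (fun v => Order.min (phi v) 1).
Proof.
move=> [H0 H1]; split=> [v|v]; first by rewrite le_min H0 ler01.
case: (boolP [exists u, (Wmx R e v u == 1) && (1 <= phi u)]).
  move/existsP=> [u /andP[/eqP Hw Hp]].
  rewrite /Wapply (bigD1 u) //= Hw mul1r.
  have -> : Order.min (phi u) 1 = 1 by apply/eqP; rewrite eq_le ge_min lexx orbT le_min Hp lexx.
  rewrite lerDl; apply: sumr_ge0 => w _; apply: mulr_ge0; first by case/andP: (W01 v w).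
  by rewrite le_min H0 ler01.
rewrite negb_exists => /forallP Hall.
apply: le_trans (H1 v) _; rewrite /Wapply; apply: ler_sum => u _.
have := Hall u; rewrite negb_and => /orP[Hw|Hp].
  have -> : Wmx R e v u = 0 by move: Hw; rewrite /Wmx; case: ifP => _; rewrite ?eqxx.
  by rewrite !mul0r.
by rewrite -ltNge in Hp; rewrite (min_idPl (ltW Hp)).
Qed.

Lemma key (th phi : V -> R) : feasible e th -> feasible e phi ->
  #|V|%:R + l1norm th - l1norm phi <= l1norm (Wapply e th).
Proof.
move=> [T0 T1] Hphi.
have [P0 P1] := clip_feas _ Hphi.
set p := (fun v => _) in P0 P1.
have Pl1 : p =1 fun v => Order.min (phi v) 1 by [].
have Hn : \sum_(v : V) 1 = #|V|%:R :> R by rewrite sumr_const.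
have e1 : l1norm th <= \sum_v p v * Wapply e th v.
  rewrite Wswap /l1norm; apply: ler_sum => u _.
  rewrite ger0_norm //; have := T0 u; have := P1 u; nra.
have e2 : \sum_v p v * Wapply e th v <= \sum_v (Wapply e th v - 1 + p v).
  apply: ler_sum => v _.
  have hp1 : p v <= 1 by rewrite /p ge_min lexx orbT.
  have := P0 v; have := T1 v; nra.
have e3 : l1norm p <= l1norm phi.
  apply: ler_sum => v _; rewrite (ger0_norm (P0 v)).
  by rewrite (ger0_norm (proj1 Hphi v)) /p ge_min lexx.
have e4 : \sum_v (Wapply e th v - 1 + p v) = l1norm (Wapply e th) - #|V|%:R + l1norm p.
  rewrite big_split sumrB Hn /= /l1norm; congr (_ - _ + _).
    by apply: eq_bigr => v _; rewrite ger0_norm // (le_trans ler01 (T1 v)).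
  by apply: eq_bigr => v _; rewrite ger0_norm //; apply: P0.
lra.
Qed.
End Aux.

Theorem lemma5p8 (R : realType) (V : finType) (e : rel V)
  (He : simple_graph e) (theta : V -> R)
  (Hfeas : feasible e theta) (H01 : forall v, 0 <= theta v <= 1) :
  l1norm (Wapply e theta) >= #|V|%:R + l1norm theta - OPT R e.
Proof.
have : #|V|%:R + l1norm theta - l1norm (Wapply e theta) <= OPT R e.
  apply: lb_le_inf.
    by exists (l1norm theta); exists theta.
  move=> x [phi [Hphi ->]]; have := @key _ _ _ He _ _ Hfeas Hphi; lra.
lra.
Qed.
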